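(* $\mathrm{Pol}(\mathbb{M}_0)$ does not satisfy $\Sigma_2$, but $\mathrm{Pol}(\mathbb{M}_1)$ satisfies $\Sigma_2$.
   Context: $\psi_2=\{(0,1),(1,0),(2,2)\}$; $\mu_2$ is the equivalence relation on $\{0,1,2\}$ with classes $\{0,1\},\{2\}$ and $\rho_2=\{0,1,2\}^2\setminus\mu_2$. $\mathbb{M}_0=(\{0,1,2\};\psi_2,\rho_2,\{0,1\},\{0\},\{1\},\{2\})$ and $\mathbb{M}_1=(\{0,1,2\};\psi_2,\mu_2,\{0\},\{1\},\{2\})$; $\mathrm{Pol}$ denotes the clone of all operations preserving the given relations. A clone satisfies $\Sigma_2$ if it contains a 5-ary symmetric operation $f$ (invariant under all permutations of its arguments) satisfying $f(x,x,y,y,z)\approx f(x,y,y,z,z)$. *)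

(* Defs.v *)
From mathcomp Require Import all_boot perm.
Set Implicit Arguments. Unset Strict Implicit. Unset Printing Implicit Defensive.

Notation D := 'I_3.

Definition op (n : nat) := {ffun 'I_n -> D} -> D.

Definition preserves2 n (R : rel D) (f : op n) : Prop :=
  forall x y : {ffun 'I_n -> D}, (forall i, R (x i) (y i)) -> R (f x) (f y).

Definition preserves1 n (P : pred D) (f : op n) : Prop :=
  forall x : {ffun 'I_n -> D}, (forall i, P (x i)) -> P (f x).

Definition psi2 : rel D := fun a b =>
  [|| (val a == 0) && (val b == 1), (val a == 1) && (val b == 0)
    | (val a == 2) && (val b == 2)].

Definition mu2 : rel D := fun a b => (val a == 2) == (val b == 2).
Definition rho2 : rel D := fun a b => ~~ mu2 a b.

Definition in01 : pred D := fun a => val a <= 1.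
Definition is_const (c : nat) : pred D := fun a => val a == c.

Definition Pol_M0 (n : nat) (f : op n) : Prop :=
  [/\ preserves2 psi2 f, preserves2 rho2 f, preserves1 in01 f,
      preserves1 (is_const 0) f
    & preserves1 (is_const 1) f /\ preserves1 (is_const 2) f].

Definition Pol_M1 (n : nat) (f : op n) : Prop :=
  [/\ preserves2 psi2 f, preserves2 mu2 f,
      preserves1 (is_const 0) f, preserves1 (is_const 1) f
    & preserves1 (is_const 2) f].

Definition tup5 (a b c d e : D) : {ffun 'I_5 -> D} :=
  [ffun i : 'I_5 => nth a [:: a; b; c; d; e] i].

Definition Sigma2 (C : forall n, op n -> Prop) : Prop :=
  exists f : op 5,
    [/\ C 5 f,
        (forall (s : 'S_5) (x : {ffun 'I_5 -> D}), f [ffun i => x (s i)] = f x)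
      & (forall x y z : D, f (tup5 x x y y z) = f (tup5 x y y z z))].

(* Main.v *)
Require Import Defs.
From mathcomp Require Import all_boot perm zify.

Definition o3 (n : nat) (H : n < 3) : D := Ordinal H.
Notation d0 := (@Ordinal 3 0 isT).
Notation d1 := (@Ordinal 3 1 isT).
Notation d2 := (@Ordinal 3 2 isT).
Notation p0 := (@Ordinal 5 0 isT).
Notation p1 := (@Ordinal 5 1 isT).
Notation p2 := (@Ordinal 5 2 isT).
Notation p3 := (@Ordinal 5 3 isT).
Notation p4 := (@Ordinal 5 4 isT).

Lemma fix2 {f : op 5} : preserves2 psi2 f ->
  (forall (s : 'S_5) (x : {ffun 'I_5 -> D}), f [ffun i => x (s i)] = f x) ->
  forall (x : {ffun 'I_5 -> D}) (s : 'S_5), (forall i, psi2 (x i) (x (s i))) -> val (f x) = 2.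
Proof.
move=> Hp Hs x s Hi.
have := Hp x [ffun i => x (s i)]; rewrite Hs.
have H : forall i, psi2 (x i) ([ffun i => x (s i)] i) by move=> i; rewrite ffunE.
move=> /(_ H); case: (f x) => [[|[|[|?]]] ?] //.
Qed.

Lemma part1 : ~ Sigma2 Pol_M0.
Proof.
case=> f [[Hp Hr _ _ _] Hs Hid].
have A : val (f (tup5 d0 d0 d1 d1 d2)) = 2.
  pose s : 'S_5 := (tperm p0 p2 * tperm p1 p3)%g. apply: (fix2 (f:=f) Hp Hs _ s).
  move=> i; rewrite /s !ffunE permM !permE /=.
  by case: i => [[|[|[|[|[|?]]]]] ?].
have B : val (f (tup5 d2 d2 d2 d0 d1)) = 2.
  pose s : 'S_5 := tperm p3 p4. apply: (fix2 (f:=f) Hp Hs _ s).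
  move=> i; rewrite /s !ffunE !permE /=.
  by case: i => [[|[|[|[|[|?]]]]] ?].
rewrite Hid in A.
have := Hr (tup5 d0 d1 d1 d2 d2) (tup5 d2 d2 d2 d0 d1).
have H : forall i, rho2 (tup5 d0 d1 d1 d2 d2 i) (tup5 d2 d2 d2 d0 d1 i).
  by move=> i; rewrite !ffunE; case: i => [[|[|[|[|[|?]]]]] ?].
move=> /(_ H); rewrite /rho2 /mu2 A B //.
Qed.

Definition cnt (x : {ffun 'I_5 -> D}) (c : nat) : nat := \sum_(i < 5) (val (x i) == c).
Definition fM1 : op 5 := fun x =>
  if 0 < cnt x 2 then d2 else if 2 < cnt x 0 then d0 else d1.

Lemma cnt_perm (s : 'S_5) (x : {ffun 'I_5 -> D}) c : cnt [ffun i => x (s i)] c = cnt x c.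
Proof.
rewrite /cnt [RHS](reindex_inj (@perm_inj _ s)) /=.
by apply: eq_bigr => i _; rewrite ffunE.
Qed.

Lemma cnt_const (x : {ffun 'I_5 -> D}) c k : (forall i, val (x i) = c) -> cnt x k = (c == k) * 5.
Proof.
move=> H; rewrite /cnt (eq_bigr (fun _ => nat_of_bool (c == k))); last by move=> i _; rewrite H.
by rewrite sum_nat_const card_ord mulnC.
Qed.

Lemma cnt_sum (x : {ffun 'I_5 -> D}) : cnt x 0 + cnt x 1 + cnt x 2 = 5.
Proof.
rewrite /cnt -!big_split /=; rewrite -[RHS](card_ord 5) -sum1_card.
apply: eq_bigr => i _; by case: (x i) => [[|[|[|?]]] ?].
Qed.

Lemma cnt_eq (x y : {ffun 'I_5 -> D}) c c' : (forall i, (val (x i) == c) = (val (y i) == c')) -> cnt x c = cnt y c'.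
Proof. by move=> H; apply: eq_bigr => i _; rewrite H. Qed.

Lemma part2 : Sigma2 Pol_M1.
Proof.
exists fM1; split.
- split.
  + move=> x y H.
    have E2 : cnt x 2 = cnt y 2.
      by apply: cnt_eq => i; move: (H i); case: (x i) => [[|[|[|?]]] ?]; case: (y i) => [[|[|[|?]]] ?].
    have E0 : cnt y 0 = cnt x 1.
      by apply: cnt_eq => i; move: (H i); case: (x i) => [[|[|[|?]]] ?]; case: (y i) => [[|[|[|?]]] ?].
    have E1 : cnt y 1 = cnt x 0.
      by apply: cnt_eq => i; move: (H i); case: (x i) => [[|[|[|?]]] ?]; case: (y i) => [[|[|[|?]]] ?].
    have Sx := cnt_sum x; have Sy := cnt_sum y.
    rewrite /fM1 -E2 E0.
    case: ifP => // H2; case: ifP => H0; case: ifP => H1 //; exfalso.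
    * move: H2 H0 H1 Sx; lia.
    * move: H2 H0 H1 Sx; lia.
  + move=> x y H.
    have E2 : cnt x 2 = cnt y 2.
      by apply: cnt_eq => i; move: (H i); rewrite /mu2 => /eqP.
    by rewrite /fM1 -E2; case: ifP => _ //; case: ifP => _; case: ifP => _.
  + move=> x H; have C k := @cnt_const x 0 k (fun i => eqP (H i)); by rewrite /fM1 !C.
  + move=> x H; have C k := @cnt_const x 1 k (fun i => eqP (H i)); by rewrite /fM1 !C.
  + move=> x H; have C k := @cnt_const x 2 k (fun i => eqP (H i)); by rewrite /fM1 !C.
- by move=> s x; rewrite /fM1 !cnt_perm.
- move=> a b c; rewrite /fM1 /cnt !big_ord_recr !big_ord0 /= !ffunE /=.
  by case: a => [[|[|[|?]]] ?]; case: b => [[|[|[|?]]] ?]; case: c => [[|[|[|?]]] ?].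
Qed.

Theorem lemma6p8 : ~ Sigma2 Pol_M0 /\ Sigma2 Pol_M1.
Proof. split; [exact: part1 | exact: part2]. Qed.
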